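(* Let $q$ be a power of an odd prime and let $S_j=\{x\in\mathbb F_q^d: x_1^2+\cdots+x_d^2=j\}$ with $j\ne0$. Then: (1) if $d\ge2$ is even, $S_j$ contains an affine subspace $H$ with $|H|=q^{(d-2)/2}$; (2) if $d=4k+1$ ($k$ a positive integer) and $j$ is not a square, $S_j$ contains an affine subspace $H$ with $|H|=q^{(d-3)/2}$; (3) if $d=4k+1$ and $j$ is a square, $S_j$ contains an affine subspace $H$ with $|H|=q^{(d-1)/2}$; (4) if $d=4k-1$ ($k$ a positive integer) and $-j$ is not a square, $S_j$ contains an affine subspace $H$ with $|H|=q^{(d-3)/2}$; (5) if $d=4k-1$ and $-j$ is a square, $S_j$ contains an affine subspace $H$ with $|H|=q^{(d-1)/2}$.
   Context: Squares refer to squares in $\mathbb F_q^*$. *)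

(* Defs.v *)
From HB Require Import structures.
From mathcomp Require Import all_boot all_order all_algebra all_field.
Set Implicit Arguments. Unset Strict Implicit. Unset Printing Implicit Defensive.
Import GRing.Theory.
Local Open Scope ring_scope.

(* Vectors of F_q^d are row vectors 'rV[F]_d; coordinates x_1..x_d are x 0 i. *)

Definition sphere (F : finFieldType) (d : nat) (j : F) : {set 'rV[F]_d} :=
  [set x : 'rV[F]_d | \sum_(i < d) x ord0 i ^+ 2 == j].

Definition is_square (F : finFieldType) (j : F) : Prop :=
  exists y : F, y ^+ 2 = j.

Definition contains_affine_subspace (F : finFieldType) (d : nat)
    (S : {set 'rV[F]_d}) (m : nat) : Prop :=
  exists (a : 'rV[F]_d) (V : {vspace 'rV[F]_d}),
    let H := [set x : 'rV[F]_d | x - a \in V] in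
    H \subset S /\ #|H| = (#|F| ^ m)%N.

(* Main.v *)
Require Import Defs.
From HB Require Import structures.
From mathcomp Require Import all_boot all_order all_algebra all_field.
From mathcomp Require Import zify ring.
Import GRing.Theory.
Local Open Scope ring_scope.

Lemma two_nz (F : finFieldType) : odd #|F| -> (2%:R : F) != 0.
Proof.
move=> Ho; apply/negP => /eqP h2.
have c2 : 2%N \in [pchar F] by apply/andP; split=> //; apply/eqP.
have e : #|F| = (2 ^ logn 2 #|F|)%N := card_pprimeChar c2.
move: Ho; rewrite e; case: (logn 2 #|F|) e => [|n] e.
  have : (1 < #|F|)%N.
    by rewrite (cardD1 (0:F)) (cardD1 (1:F)) !inE oner_neq0.
  by rewrite e.
by rewrite expnS /= oddM.
Qed.

Lemma sum2sq (F : finFieldType) (Ho : odd #|F|) (c : F) :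
  exists x y : F, x ^+ 2 + y ^+ 2 = c.
Proof.
pose S := [set x ^+ 2 | x : F].
pose T := [set c - z | z in S].
have cT : #|T| = #|S|.
  by apply: card_imset => u v /= e; apply: oppr_inj; apply: (addrI c).
pose b (x : F) := (enum_rank x <= enum_rank (- x))%N.
pose g (x : F) := (x ^+ 2, b x).
have ginj : injective g.
  move=> x y [e1 e2]; move/eqP: e1; rewrite eqf_sqr => /orP [/eqP //|/eqP exy].
  move: e2; rewrite /b exy opprK.
  case: (leqP (enum_rank y) (enum_rank (- y))) => h1 h2.
    have /enum_rank_inj : enum_rank (- y) = enum_rank y.
      by apply/eqP; rewrite -val_eqE /= eqn_leq h1 h2.
    by [].
  by move: h2; rewrite (ltnW h1).
have c1 : (#|F| <= #|S| * 2)%N.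
  have -> : (#|S| * 2 = #|setX S [set: bool]|)%N by rewrite cardsX cardsT card_bool.
  rewrite -(card_imset predT ginj).
  apply: subset_leq_card; apply/subsetP => p /imsetP [x _ ->].
  rewrite inE /=; apply/andP; split=> //; exact: imset_f.
have : (0 < #|S :&: T|)%N.
  have h2 := cardsUI S T; rewrite cT in h2.
  have h1 : (#|S :|: T| <= #|F|)%N by apply: max_card.
  have h3 : (#|F| < #|S| * 2)%N.
    rewrite ltn_neqAle c1 andbT; apply/negP => /eqP e.
    by move: Ho; rewrite e oddM andbF.
  lia.
case/card_gt0P => z; rewrite inE => /andP [/imsetP [x _ ->] /imsetP [w /imsetP [y _ ->] e]].
by exists x, y; rewrite e subrK.
Qed.

Section G.
Context {F : finFieldType}.
Definition Q {n} (x : 'rV[F]_n) := \sum_(i < n) x ord0 i ^+ 2.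
Definition Good n (j : F) m := exists (a : 'rV[F]_n) (M : 'M[F]_(m, n)),
  (forall y : 'rV_m, y *m M = 0 -> y = 0) /\ forall y, Q (a + y *m M) = j.

Lemma Q_row n1 n2 (u : 'rV[F]_n1) (v : 'rV[F]_n2) : Q (row_mx u v) = Q u + Q v.
Proof. by rewrite /Q big_split_ord /=; congr (_ + _); apply: eq_bigr => i _; rewrite ?row_mxEl ?row_mxEr. Qed.

Lemma Good_cat {n1 n2 j1 j2 m1 m2} : Good n1 j1 m1 -> Good n2 j2 m2 ->
  Good (n1 + n2) (j1 + j2) (m1 + m2).
Proof.
move=> [a1 [M1 [i1 q1]]] [a2 [M2 [i2 q2]]].
exists (row_mx a1 a2), (block_mx M1 0 0 M2); split.
  move=> y; rewrite -(hsubmxK y) mul_row_block !mulmx0 addr0 add0r.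
  rewrite -row_mx0 => /eq_row_mx [e1 e2]; by rewrite (i1 _ e1) (i2 _ e2) row_mx0.
move=> y; rewrite -(hsubmxK y) mul_row_block !mulmx0 addr0 add0r.
by rewrite add_row_mx Q_row q1 q2.
Qed.

Lemma Good_eq {n n' j j' m m'} : Good n j m -> n = n' -> j = j' -> m = m' -> Good n' j' m'.
Proof. by move=> g <- <- <-. Qed.

Lemma Good1 (c : F) : Good 1 (c ^+ 2) 0.
Proof.
exists (const_mx c), 0; split; first by move=> y _; apply/rowP => -[].
by move=> y; rewrite mulmx0 addr0 /Q big_ord1 mxE.
Qed.

Lemma Good_sphere n j m : Good n j m -> contains_affine_subspace (sphere n j) m.
Proof.
move=> [a [M [inj q]]].
exists a, (limg (linfun (mulmxr M))).
have eH : [set x | x - a \in limg (linfun (mulmxr M))] = [set a + y *m M | y : 'rV[F]_m].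
  apply/setP => x; rewrite inE; apply/memv_imgP/imsetP => -[y _ e].
    by exists y => //; rewrite lfunE /= in e; rewrite -e addrC subrK.
  by exists y; rewrite ?memvf // lfunE /= e addrC addKr.
rewrite /= eH; split.
  by apply/subsetP => x /imsetP [y _ ->]; rewrite /sphere inE; apply/eqP; exact: (q y).
rewrite card_imset ?card_mx ?mul1n //.
move=> y1 y2 /addrI e; apply/eqP; rewrite -subr_eq0; apply/eqP/inj.
by rewrite mulmxBl e subrr.
Qed.
Lemma G4 {a b : F} : a ^+ 2 + b ^+ 2 = -1 -> Good 4 0 2.
Proof.
move=> hab.
pose r0 := [:: 1; 0; a; b]. pose r1 := [:: 0; 1; b; -a].
exists 0, (\matrix_(i < 2, k < 4) (if i == 0 :> nat then r0`_k else r1`_k)); split.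
  move=> y e; apply/rowP => i.
  have := congr1 (fun v : 'rV_4 => v ord0 (widen_ord (isT : 2 <= 4)%N i)) e.
  rewrite !mxE !big_ord_recl big_ord0 !mxE.
    case: i => -[|[|//]] ? /=; rewrite ?mulr1 ?mulr0 ?addr0 ?add0r => <-;
    by congr (y _ _); apply: val_inj.
move=> y; rewrite add0r /Q !big_ord_recl big_ord0 !mxE !big_ord_recl !big_ord0 !mxE /=.
transitivity ((y ord0 ord0 ^+ 2 + y ord0 (lift ord0 ord0) ^+ 2) * (1 + (a ^+ 2 + b ^+ 2))); first by ring.
by rewrite hab subrr mulr0.
Qed.

Lemma G3 {a b : F} (c : F) : a ^+ 2 + b ^+ 2 = -1 -> Good 3 (- c ^+ 2) 1.
Proof.
move=> hab.
exists (\row_(k < 3) [:: 0; c * b; - (c * a)]`_k), (\matrix_(i < 1, k < 3) [:: 1; a; b]`_k); split.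
  move=> y e; apply/rowP => i.
  have := congr1 (fun v : 'rV_3 => v ord0 ord0) e.
  rewrite !mxE big_ord1 !mxE /= mulr1 => h.
  by rewrite (ord1 i) h ?mxE.
move=> y; rewrite /Q !big_ord_recl big_ord0 !mxE !big_ord1 !mxE /=.
transitivity ((y ord0 ord0 ^+ 2) * (1 + (a ^+ 2 + b ^+ 2)) + c ^+ 2 * (a ^+ 2 + b ^+ 2)); first by ring.
by rewrite hab subrr mulr0 add0r mulrN1.
Qed.

Lemma Good_iter {a b : F} : a ^+ 2 + b ^+ 2 = -1 -> forall n j m t, Good n j m -> Good (n + 4 * t) j (m + 2 * t).
Proof.
move=> hab n j m t g; elim: t => [|t IH]; first by apply: (Good_eq g) => //; lia.
apply: (Good_eq (Good_cat IH (G4 hab))); rewrite ?addr0 //; lia.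
Qed.

End G.

Arguments two_nz {F}.
Arguments sum2sq {F}.

Theorem lemma1p13 (F : finFieldType) (Hodd : odd #|F|) (j : F) (hj : j != 0) :
  (forall d : nat, (2 <= d)%N -> ~~ odd d ->
     contains_affine_subspace (sphere d j) ((d - 2) %/ 2)) /\
  (forall k d : nat, (0 < k)%N -> d = (4 * k + 1)%N -> ~ is_square j ->
     contains_affine_subspace (sphere d j) ((d - 3) %/ 2)) /\
  (forall k d : nat, (0 < k)%N -> d = (4 * k + 1)%N -> is_square j ->
     contains_affine_subspace (sphere d j) ((d - 1) %/ 2)) /\
  (forall k d : nat, (0 < k)%N -> d = (4 * k - 1)%N -> ~ is_square (- j) ->
     contains_affine_subspace (sphere d j) ((d - 3) %/ 2)) /\
  (forall k d : nat, (0 < k)%N -> d = (4 * k - 1)%N -> is_square (- j) ->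
     contains_affine_subspace (sphere d j) ((d - 1) %/ 2)).
Proof.
have two := two_nz Hodd.
have [a0 [b0 hab]] := sum2sq Hodd (-1).
have Gd2 : Good 2 j 0.
  have [x [y e]] := sum2sq Hodd j.
  exact: (Good_eq (Good_cat (Good1 x) (Good1 y))).
have Gz1 : Good 1 (0 : F) 0 by apply: (Good_eq (Good1 (0 : F))) => //; rewrite expr2 mulr0.
have Gd4 : Good 4 j 1.
  apply: (Good_eq (Good_cat (G3 ((j - 1) / 2%:R) hab) (Good1 ((j + 1) / 2%:R)))) => //.
  by field.
split.
  move=> d d2 hd.
  have e := odd_double_half d; rewrite (negbTE hd) add0n -muln2 in e.
  have : (d = 2 + 4 * ((d-2) %/ 4) \/ d = 4 + 4 * ((d-4) %/ 4))%N by lia.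
  case=> hd'; apply: Good_sphere.
    by apply: (Good_eq (Good_iter hab _ _ _ ((d-2) %/ 4) Gd2)) => //; lia.
  by apply: (Good_eq (Good_iter hab _ _ _ ((d-4) %/ 4) Gd4)) => //; lia.
split.
  move=> k d k0 -> _; apply: Good_sphere.
  by apply: (Good_eq (Good_iter hab _ _ _ (k - 1) (Good_cat Gd4 Gz1))); rewrite ?addr0 //; lia.
split.
  move=> k d k0 -> [s hs]; apply: Good_sphere.
  by apply: (Good_eq (Good_iter hab _ _ _ k (Good1 s))); rewrite ?hs //; lia.
split.
  move=> k d k0 -> _; apply: Good_sphere.
  by apply: (Good_eq (Good_iter hab _ _ _ (k - 1) (Good_cat Gd2 Gz1))); rewrite ?addr0 //; lia.
move=> k d k0 -> [s hs]; apply: Good_sphere.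
by apply: (Good_eq (Good_iter hab _ _ _ (k - 1) (G3 s hab))); rewrite ?hs ?opprK //; lia.
Qed.
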